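(* Let $\mathcal X$ be a linear Abelian category over a field $\mathbb F$ and let $L\subseteq\mathbb Z$ be any subset. Then the category of tempered $L$-persistence objects in $\mathcal X$ is Krull–Schmidt.
   Context: An additive category is linear over $\mathbb F$ if each Hom-set is a finite-dimensional $\mathbb F$-vector space and composition is bilinear. For $L\subseteq\mathbb Z$, an $L$-persistence object in $\mathcal X$ is a family of objects $(X_p)_{p\in\mathbb Z}$ together with, for each $p$, a morphism $X_p\to X_{p-1}$ if $p\in L$ and a morphism $X_{p-1}\to X_p$ if $p\notin L$. A morphism of $L$-persistence objects is a family of morphisms $f_p:X_p\to X'_p$ making all resulting squares commute. It is tempered if all but finitely many of its arrows are isomorphisms. An object is indecomposable if it is nonzero and not isomorphic to a direct sum of two nonzero objects. A ring is local if $1\ne0$ and for each $f$, if $f$ is not invertible then $1-f$ is invertible. An additive category is Krull–Schmidt if every object is isomorphic to a finite direct sum of indecomposables and every indecomposable has a local endomorphism ring. *)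

(* Defs.v *)
From HB Require Import structures.
From mathcomp Require Import all_boot all_order all_algebra.
Set Implicit Arguments. Unset Strict Implicit. Unset Printing Implicit Defensive.
Import Order.TTheory GRing.Theory Num.Theory.
Local Open Scope ring_scope.

Record PreaddData := {
  pob : Type;
  phom : pob -> pob -> Type;
  pcomp : forall A B C, phom B C -> phom A B -> phom A C;
  pid : forall A, phom A A;
  padd : forall A B, phom A B -> phom A B -> phom A B;
  pzero : forall A B, phom A B;
  popp : forall A B, phom A B -> phom A B }.
Arguments pcomp {p A B C}.
Arguments pid {p}.
Arguments padd {p A B}.
Arguments pzero {p A B}.
Arguments popp {p A B}.

Section KS.
Variable C : PreaddData.
Local Notation ob := (pob C).
Local Notation hom := (@phom C).

Definition is_iso (A B : ob) (f : hom A B) : Prop :=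
  exists g : hom B A, pcomp g f = pid A /\ pcomp f g = pid B.

Definition isomorphic (A B : ob) : Prop := exists f : hom A B, is_iso f.

Definition is_zero_ob (Z : ob) : Prop :=
  forall B, (forall f g : hom Z B, f = g) /\ (forall f g : hom B Z, f = g).

Definition is_biprod (A B Y : ob) : Prop :=
  exists (i1 : hom A Y) (i2 : hom B Y) (p1 : hom Y A) (p2 : hom Y B),
    [/\ pcomp p1 i1 = pid A, pcomp p2 i2 = pid B,
        pcomp p1 i2 = pzero, pcomp p2 i1 = pzero
      & padd (pcomp i1 p1) (pcomp i2 p2) = pid Y].

Definition is_direct_sum (n : nat) (A : 'I_n -> ob) (Y : ob) : Prop :=
  exists (i : forall k, hom (A k) Y) (p : forall k, hom Y (A k)),
    [/\ forall k, pcomp (p k) (i k) = pid (A k),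
        forall j k, j != k -> pcomp (p j) (i k) = pzero
      & \big[@padd C Y Y/pzero]_(k < n) pcomp (i k) (p k) = pid Y].

Definition indecomposable (X : ob) : Prop :=
  ~ is_zero_ob X /\
  ~ (exists A B Y, [/\ ~ is_zero_ob A, ~ is_zero_ob B, is_biprod A B Y
                     & isomorphic X Y]).

Definition end_unit (X : ob) (f : hom X X) : Prop :=
  exists g : hom X X, pcomp f g = pid X /\ pcomp g f = pid X.

Definition local_end (X : ob) : Prop :=
  pid X <> pzero /\
  forall f : hom X X, ~ end_unit f -> end_unit (padd (pid X) (popp f)).

Definition KrullSchmidt : Prop :=
  (forall X : ob, exists (n : nat) (A : 'I_n -> ob),
      (forall k, indecomposable (A k)) /\
      exists Y, is_direct_sum A Y /\ isomorphic X Y) /\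
  (forall X : ob, indecomposable X -> local_end X).
End KS.

Record LinCat (F : fieldType) := {
  cob : Type;
  chom : cob -> cob -> vectType F;    (* finite-dimensional F-spaces *)
  ccomp : forall A B C, chom B C -> chom A B -> chom A C;
  cid : forall A, chom A A;
  ccompA : forall A B C D (f : chom C D) (g : chom B C) (h : chom A B),
      ccomp f (ccomp g h) = ccomp (ccomp f g) h;
  ccomp1m : forall A B (f : chom A B), ccomp (cid B) f = f;
  ccompm1 : forall A B (f : chom A B), ccomp f (cid A) = f;
  ccompDl : forall A B C (a : F) (f g : chom B C) (h : chom A B),
      ccomp (a *: f + g) h = a *: ccomp f h + ccomp g h;
  ccompDr : forall A B C (a : F) (h : chom B C) (f g : chom A B),
      ccomp h (a *: f + g) = a *: ccomp h f + ccomp h g }.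
Arguments cob {F}.
Arguments chom {F l}.
Arguments ccomp {F l A B C}.
Arguments cid {F l}.

Section Abelian.
Variables (F : fieldType) (X : LinCat F).
Local Notation ob := (cob X).
Local Notation hom := (@chom F X).

Definition czero_ob (Z : ob) : Prop :=
  forall B, (forall f g : hom Z B, f = g) /\ (forall f g : hom B Z, f = g).

Definition is_kernel (A B K : ob) (f : hom A B) (k : hom K A) : Prop :=
  ccomp f k = 0 /\
  forall W (g : hom W A), ccomp f g = 0 -> exists! u : hom W K, ccomp k u = g.

Definition is_cokernel (A B Q : ob) (f : hom A B) (q : hom B Q) : Prop :=
  ccomp q f = 0 /\
  forall W (g : hom B W), ccomp g f = 0 -> exists! u : hom Q W, ccomp u q = g.

Definition monic (A B : ob) (f : hom A B) : Prop :=
  forall W (g h : hom W A), ccomp f g = ccomp f h -> g = h.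

Definition epic (A B : ob) (f : hom A B) : Prop :=
  forall W (g h : hom B W), ccomp g f = ccomp h f -> g = h.

Definition abelian : Prop :=
  (exists Z, czero_ob Z) /\ [/\
      (forall A B, exists (Y : ob) (i1 : hom A Y) (i2 : hom B Y)
                     (p1 : hom Y A) (p2 : hom Y B),
          [/\ ccomp p1 i1 = cid A, ccomp p2 i2 = cid B,
              ccomp p1 i2 = 0, ccomp p2 i1 = 0
            & ccomp i1 p1 + ccomp i2 p2 = cid Y]),
      (forall A B (f : hom A B), exists K (k : hom K A), is_kernel f k),
      (forall A B (f : hom A B), exists Q (q : hom B Q), is_cokernel f q),
      (forall A B (f : hom A B), monic f ->
          exists C (g : hom B C), is_kernel g f)
    & (forall A B (f : hom A B), epic f ->
          exists C (g : hom C A), is_cokernel g f)].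

Lemma ccompDl1 A B C (f g : hom B C) (h : hom A B) :
  ccomp (f + g) h = ccomp f h + ccomp g h.
Proof. by have := ccompDl 1 f g h; rewrite !scale1r. Qed.

Lemma ccompDr1 A B C (h : hom B C) (f g : hom A B) :
  ccomp h (f + g) = ccomp h f + ccomp h g.
Proof. by have := ccompDr 1 h f g; rewrite !scale1r. Qed.

Lemma ccomp0l A B C (h : hom A B) : ccomp (0 : hom B C) h = 0.
Proof.
have E := ccompDl1 (0 : hom B C) 0 h; rewrite addr0 in E.
by apply: (addrI (ccomp (0 : hom B C) h)); rewrite addr0 -E.
Qed.

Lemma ccomp0r A B C (h : hom B C) : ccomp h (0 : hom A B) = 0.
Proof.
have E := ccompDr1 h (0 : hom A B) 0; rewrite addr0 in E.
by apply: (addrI (ccomp h (0 : hom A B))); rewrite addr0 -E.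
Qed.

Lemma ccompNl A B C (f : hom B C) (h : hom A B) : ccomp (- f) h = - ccomp f h.
Proof.
apply/eqP; rewrite -subr_eq0 opprK -ccompDl1 addNr; exact/eqP/ccomp0l.
Qed.

Lemma ccompNr A B C (h : hom B C) (f : hom A B) : ccomp h (- f) = - ccomp h f.
Proof.
apply/eqP; rewrite -subr_eq0 opprK -ccompDr1 addNr; exact/eqP/ccomp0r.
Qed.
End Abelian.

(* L ⊆ ℤ is given by its (classical) indicator L : int -> bool.        *)
Section Persistence.
Variables (F : fieldType) (X : LinCat F) (L : int -> bool).
Local Notation ob := (cob X).
Local Notation hom := (@chom F X).

(* type of the p-th structure arrow: X_p -> X_(p-1) if p ∈ L, else X_(p-1) -> X_p *)
Definition arrT (Y : int -> ob) (p : int) (b : bool) : Type :=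
  if b then hom (Y p) (Y (p - 1)) else hom (Y (p - 1)) (Y p).

Record pers_obj := PersObj {
  px : int -> ob;
  parr : forall p : int, arrT px p (L p) }.

Definition cis_iso (A B : ob) (f : hom A B) : Prop :=
  exists g : hom B A, ccomp g f = cid A /\ ccomp f g = cid B.

Definition arr_is_iso (Y : int -> ob) (p : int) (b : bool) : arrT Y p b -> Prop :=
  if b as b return arrT Y p b -> Prop
  then fun a : hom (Y p) (Y (p - 1)) => cis_iso a
  else fun a : hom (Y (p - 1)) (Y p) => cis_iso a.

Definition tempered (Y : pers_obj) : Prop :=
  exists s : seq int, forall p, p \notin s -> arr_is_iso (parr Y p).

Definition square (Y Z : pers_obj) (f : forall p, hom (px Y p) (px Z p))
    (p : int) (b : bool) : arrT (px Y) p b -> arrT (px Z) p b -> Prop :=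
  if b as b return arrT (px Y) p b -> arrT (px Z) p b -> Prop
  then fun (a : hom (px Y p) (px Y (p - 1))) (a' : hom (px Z p) (px Z (p - 1))) =>
         ccomp a' (f p) = ccomp (f (p - 1)) a
  else fun (a : hom (px Y (p - 1)) (px Y p)) (a' : hom (px Z (p - 1)) (px Z p)) =>
         ccomp a' (f (p - 1)) = ccomp (f p) a.

Definition commutes (Y Z : pers_obj) (f : forall p, hom (px Y p) (px Z p)) :=
  forall p, square f (parr Y p) (parr Z p).

Definition tobj := {Y : pers_obj | tempered Y}.

Definition thom (Y Z : tobj) :=
  {f : forall p, hom (px (sval Y) p) (px (sval Z) p) | commutes f}.

Lemma commutes_comp (Y Z W : pers_obj) f g :
  commutes (Y := Z) (Z := W) g -> commutes (Y := Y) (Z := Z) f ->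
  commutes (Y := Y) (Z := W) (fun p => ccomp (g p) (f p)).
Proof.
move=> hg hf p; move: (hg p) (hf p); rewrite /square.
move: (parr Y p) (parr Z p) (parr W p); case: (L p) => a b c /= H1 H2.
- by rewrite ccompA H1 -ccompA H2 ccompA.
- by rewrite ccompA H1 -ccompA H2 ccompA.
Qed.

Lemma commutes_id (Y : pers_obj) : commutes (Y := Y) (Z := Y) (fun p => cid _).
Proof.
move=> p; rewrite /square; move: (parr Y p); case: (L p) => a /=;
by rewrite ccomp1m ccompm1.
Qed.

Lemma commutes_add (Y Z : pers_obj) f g :
  commutes (Y := Y) (Z := Z) f -> commutes (Y := Y) (Z := Z) g ->
  commutes (Y := Y) (Z := Z) (fun p => f p + g p).
Proof.
move=> hf hg p; move: (hf p) (hg p); rewrite /square.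
move: (parr Y p) (parr Z p); case: (L p) => a b /= H1 H2;
by rewrite ccompDr1 ccompDl1 H1 H2.
Qed.

Lemma commutes_zero (Y Z : pers_obj) :
  commutes (Y := Y) (Z := Z) (fun p => 0).
Proof.
move=> p; rewrite /square; move: (parr Y p) (parr Z p); case: (L p) => a b /=;
by rewrite ccomp0l ccomp0r.
Qed.

Lemma commutes_opp (Y Z : pers_obj) f :
  commutes (Y := Y) (Z := Z) f -> commutes (Y := Y) (Z := Z) (fun p => - f p).
Proof.
move=> hf p; move: (hf p); rewrite /square.
move: (parr Y p) (parr Z p); case: (L p) => a b /= H;
by rewrite ccompNr ccompNl H.
Qed.

Definition tcomp (A B C : tobj) (g : thom B C) (f : thom A B) : thom A C :=
  exist _ _ (commutes_comp (proj2_sig g) (proj2_sig f)).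
Definition tid (A : tobj) : thom A A := exist _ _ (commutes_id (sval A)).
Definition tadd (A B : tobj) (f g : thom A B) : thom A B :=
  exist _ _ (commutes_add (proj2_sig f) (proj2_sig g)).
Definition tzero (A B : tobj) : thom A B := exist _ _ (commutes_zero _ _).
Definition topp (A B : tobj) (f : thom A B) : thom A B :=
  exist _ _ (commutes_opp (proj2_sig f)).

Definition tempered_pers_cat : PreaddData :=
  {| pob := tobj; phom := thom; pcomp := tcomp; pid := tid;
     padd := tadd; pzero := tzero; popp := topp |}.
End Persistence.

(* Main.v *)
Require Import Defs.
From HB Require Import structures.
From mathcomp Require Import all_boot all_order all_algebra.
From mathcomp Require boolp.
From mathcomp Require Import zify.
From Stdlib Require Import FunctionalExtensionality ProofIrrelevance ClassicalEpsilon Classical.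
Set Implicit Arguments. Unset Strict Implicit. Unset Printing Implicit Defensive.
Import Order.TTheory GRing.Theory Num.Theory.
Local Open Scope ring_scope.

Section Tcat.
Variables (F : fieldType) (X : LinCat F) (L : int -> bool).
Local Notation tob := (tobj X L).
Local Notation hm := (@thom F X L).

Lemma thom_eq (Y Z : tob) (f g : hm Y Z) : (forall p, sval f p = sval g p) -> f = g.
Proof.
case: f g => [f hf] [g hg] /= H.
have E : f = g by apply: functional_extensionality_dep.
subst; congr exist; apply: proof_irrelevance.
Qed.

HB.instance Definition _ (Y Z : tob) := boolp.gen_eqMixin (hm Y Z).
HB.instance Definition _ (Y Z : tob) := boolp.gen_choiceMixin (hm Y Z).

Lemma taddA (Y Z : tob) : associative (@tadd F X L Y Z).
Proof. by move=> f g h; apply: thom_eq => p /=; rewrite addrA. Qed.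
Lemma taddC (Y Z : tob) : commutative (@tadd F X L Y Z).
Proof. by move=> f g; apply: thom_eq => p /=; rewrite addrC. Qed.
Lemma tadd0 (Y Z : tob) : left_id (@tzero F X L Y Z) (@tadd F X L Y Z).
Proof. by move=> f; apply: thom_eq => p /=; rewrite add0r. Qed.
Lemma taddN (Y Z : tob) : left_inverse (@tzero F X L Y Z) (@topp F X L Y Z) (@tadd F X L Y Z).
Proof. by move=> f; apply: thom_eq => p /=; rewrite addNr. Qed.

HB.instance Definition _ (Y Z : tob) :=
  GRing.isZmodule.Build (hm Y Z) (@taddA Y Z) (@taddC Y Z) (@tadd0 Y Z) (@taddN Y Z).

Lemma commutes_scale (Y Z : pers_obj X L) (c : F) f :
  commutes (Y := Y) (Z := Z) f -> commutes (Y := Y) (Z := Z) (fun p => c *: f p).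
Proof.
move=> hf p; move: (hf p); rewrite /square.
move: (parr Y p) (parr Z p); case: (L p) => a b /= H.
- by rewrite -[c *: f p]addr0 ccompDr ccomp0r addr0 H -[c *: f (p-1)]addr0 ccompDl ccomp0l addr0.
- by rewrite -[c *: f (p-1)]addr0 ccompDr ccomp0r addr0 H -[c *: f p]addr0 ccompDl ccomp0l addr0.
Qed.

Definition tscale (Y Z : tob) (c : F) (f : hm Y Z) : hm Y Z :=
  exist _ _ (commutes_scale c (proj2_sig f)).

Lemma tscaleA (Y Z : tob) a b (v : hm Y Z) : tscale a (tscale b v) = tscale (a * b) v.
Proof. by apply: thom_eq => p /=; rewrite scalerA. Qed.
Lemma tscale1 (Y Z : tob) : left_id 1 (@tscale Y Z).
Proof. by move=> v; apply: thom_eq => p /=; rewrite scale1r. Qed.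
Lemma tscaleDr (Y Z : tob) : right_distributive (@tscale Y Z) +%R.
Proof. by move=> a u v; apply: thom_eq => p /=; rewrite scalerDr. Qed.
Lemma tscaleDl (Y Z : tob) (v : hm Y Z) : {morph (@tscale Y Z)^~ v: a b / a + b}.
Proof. by move=> a b; apply: thom_eq => p /=; rewrite scalerDl. Qed.

HB.instance Definition _ (Y Z : tob) :=
  GRing.Zmodule_isLmodule.Build F (hm Y Z) (@tscaleA Y Z) (@tscale1 Y Z) (@tscaleDr Y Z) (@tscaleDl Y Z).

Lemma tcompA (A B C D : tob) (f : hm C D) (g : hm B C) (h : hm A B) :
  tcomp f (tcomp g h) = tcomp (tcomp f g) h.
Proof. by apply: thom_eq => p /=; rewrite ccompA. Qed.
Lemma tcomp1l (A B : tob) (f : hm A B) : tcomp (tid B) f = f.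
Proof. by apply: thom_eq => p /=; rewrite ccomp1m. Qed.
Lemma tcomp1r (A B : tob) (f : hm A B) : tcomp f (tid A) = f.
Proof. by apply: thom_eq => p /=; rewrite ccompm1. Qed.
Lemma tcompDl (A B C : tob) (f g : hm B C) (h : hm A B) :
  tcomp (f + g) h = tcomp f h + tcomp g h.
Proof. by apply: thom_eq => p /=; rewrite ccompDl1. Qed.
Lemma tcompDr (A B C : tob) (h : hm B C) (f g : hm A B) :
  tcomp h (f + g) = tcomp h f + tcomp h g.
Proof. by apply: thom_eq => p /=; rewrite ccompDr1. Qed.
Lemma tcomp0l (A B C : tob) (h : hm A B) : tcomp (0 : hm B C) h = 0.
Proof. by apply: thom_eq => p /=; rewrite ccomp0l. Qed.
Lemma tcomp0r (A B C : tob) (h : hm B C) : tcomp h (0 : hm A B) = 0.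
Proof. by apply: thom_eq => p /=; rewrite ccomp0r. Qed.
Lemma tcompNl (A B C : tob) (f : hm B C) (h : hm A B) : tcomp (- f) h = - tcomp f h.
Proof. by apply: thom_eq => p /=; rewrite ccompNl. Qed.
Lemma tcompNr (A B C : tob) (h : hm B C) (f : hm A B) : tcomp h (- f) = - tcomp h f.
Proof. by apply: thom_eq => p /=; rewrite ccompNr. Qed.
Lemma tcompZl (A B C : tob) c (f : hm B C) (h : hm A B) : tcomp (c *: f) h = c *: tcomp f h.
Proof. by apply: thom_eq => p /=; rewrite -[c *: _]addr0 ccompDl ccomp0l addr0. Qed.
Lemma tcompZr (A B C : tob) c (h : hm B C) (f : hm A B) : tcomp h (c *: f) = c *: tcomp h f.
Proof. by apply: thom_eq => p /=; rewrite -[c *: _]addr0 ccompDr ccomp0r addr0. Qed.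

Definition endT (Y : tob) := hm Y Y.
HB.instance Definition _ (Y : tob) := GRing.Lmodule.on (endT Y).
HB.instance Definition _ (Y : tob) :=
  GRing.Zmodule_isPzRing.Build (endT Y) (@tcompA Y Y Y Y) (@tcomp1l Y Y) (@tcomp1r Y Y)
    (fun f g h => @tcompDl Y Y Y f g h) (fun h f g => @tcompDr Y Y Y h f g).

Lemma endM (Y : tob) (f g : endT Y) : f * g = tcomp f g. Proof. by []. Qed.
Lemma end1 (Y : tob) : (1 : endT Y) = tid Y. Proof. by []. Qed.
Lemma end0 (Y : tob) : (0 : endT Y) = tzero Y Y. Proof. by []. Qed.
Lemma endZl (Y : tob) c (f g : endT Y) : (c *: f) * g = c *: (f * g).
Proof. exact: tcompZl. Qed.
Lemma endZr (Y : tob) c (f g : endT Y) : f * (c *: g) = c *: (f * g).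
Proof. exact: tcompZr. Qed.

Lemma step_zero (Y : tob) (g : endT Y) q :
  arr_is_iso (parr (sval Y) q) -> (sval g q = 0 <-> sval g (q - 1) = 0).
Proof.
move=> Hi; have Hs := proj2_sig g q; move: Hi Hs; rewrite /square /arr_is_iso.
move: (parr (sval Y) q); case: (L q) => a /= [b [h1 h2]] H; split => E.
- by rewrite -[sval g _]ccompm1 -h2 ccompA -H E ?ccomp0r ?ccomp0l ?ccomp0r.
- by rewrite -[sval g _]ccomp1m -h1 -ccompA H E ?ccomp0r ?ccomp0l ?ccomp0r.
- by rewrite -[sval g _]ccomp1m -h1 -ccompA H E ?ccomp0r ?ccomp0l ?ccomp0r.
- by rewrite -[sval g _]ccompm1 -h2 ccompA -H E ?ccomp0r ?ccomp0l ?ccomp0r.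
Qed.

Lemma window_zero (Y : tob) (s : seq int)
  (hs : forall p, p \notin s -> arr_is_iso (parr (sval Y) p)) (a : int) (n : nat)
  (ha : forall x, x \in s -> (a < x) && (x <= a + n%:Z)) (g : endT Y) :
  (forall k : nat, (k <= n)%N -> sval g (a + k%:Z) = 0) -> g = 0.
Proof.
move=> Hw; apply: thom_eq => p /=.
have up : forall k : nat, sval g (a + n%:Z + k%:Z) = 0.
  elim=> [|k IH]; first by rewrite addr0; apply: Hw.
  have Hq : (a + n%:Z + k.+1%:Z) \notin s.
    by apply/negP => /ha /andP[_]; lia.
  apply/(step_zero g (hs _ Hq)).
  by have -> : a + n%:Z + k.+1%:Z - 1 = a + n%:Z + k%:Z by lia.
have down : forall k : nat, sval g (a - k%:Z) = 0.
  elim=> [|k IH]; first by rewrite subr0 -[a]addr0; apply: Hw.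
  have Hq : (a - k%:Z) \notin s by apply/negP => /ha /andP[H1 _]; lia.
  move/(step_zero g (hs _ Hq)): IH => IH.
  by have -> : a - k.+1%:Z = a - k%:Z - 1 by lia.
case: (ltP p a) => [Hp|Hp].
  by have -> : p = a - (`|a - p|%N)%:Z by lia.
case: (leP p (a + n%:Z)) => [Hp'|Hp'].
  have -> : p = a + (`|p - a|%N)%:Z by lia.
  by apply: Hw; lia.
by have -> : p = a + n%:Z + (`|(p - a - n%:Z)%R|%N)%:Z by lia.
Qed.

Fixpoint PV (Y : int -> cob X) (a : int) (n : nat) : vectType F :=
  match n with
  | 0 => chom (Y a) (Y a)
  | n'.+1 => (chom (Y a) (Y a) * PV Y (a + 1) n')%type
  end.

Fixpoint emb (Y : int -> cob X) (f : forall p, chom (Y p) (Y p)) (a : int) (n : nat)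
  : PV Y a n :=
  match n with
  | 0 => f a
  | n'.+1 => (f a, emb f (a + 1) n')
  end.

Lemma emb_zero Y f a n : emb (Y := Y) f a n = 0 -> forall k : nat, (k <= n)%N -> f (a + k%:Z) = 0.
Proof.
elim: n a => [|n IH] a /=.
  by move=> E [|k] //= _; rewrite addr0.
move=> E [|k] Hk; first by rewrite addr0; case: E.
case: E => _ /IH /(_ k Hk).
by have -> : a + 1 + k%:Z = a + k.+1%:Z by lia.
Qed.

Lemma emb_lin Y m (c : 'I_m -> F) (f : 'I_m -> forall p, chom (Y p) (Y p)) a n :
  emb (Y := Y) (fun p => \sum_i c i *: f i p) a n = \sum_i c i *: emb (f i) a n.
Proof.
elim: n a => [|n IH] a //=.
rewrite IH [RHS]surjective_pairing; congr pair.
  by rewrite (big_morph fst (id1 := 0) (op1 := +%R)) //.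
by rewrite (big_morph snd (id1 := 0) (op1 := +%R)) //.
Qed.

Lemma seq_bound (s : seq int) : exists M : nat,
  forall x, x \in s -> (- M%:Z - 1 < x) && (x <= M%:Z).
Proof.
elim: s => [|x s [M HM]]; first by exists 0%N.
exists (M + `|x|)%N => y; rewrite in_cons => /orP[/eqP ->|/HM]; lia.
Qed.

Lemma sval_sum (Y : tob) m (v : 'I_m -> endT Y) p :
  sval (\sum_i v i) p = \sum_i sval (v i) p.
Proof. by rewrite (big_morph (fun f : endT Y => sval f p) (id1 := 0) (op1 := +%R)). Qed.

Lemma key (Y : tob) : exists D : nat, forall m (w : 'I_m -> endT Y), (D < m)%N ->
  exists c : 'I_m -> F, (exists i, c i != 0) /\ \sum_i c i *: w i = 0.
Proof.
case: (proj2_sig Y) => s hs; case: (seq_bound s) => M HM.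
pose a := - M%:Z - 1; pose n := (M + M).+1.
exists (\dim {: PV (px (sval Y)) a n}) => m w Hm.
pose T := [tuple emb (fun p => sval (w i) p) a n | i < m].
have nfree : ~~ free T.
  apply/negP => /eqP; rewrite size_tuple => E.
  by have := dimvS (subvf <<T>>); rewrite E; lia.
have : ~ (forall k, \sum_(i < m) k i *: T`_i = 0 -> forall i, k i = 0).
  by move=> H; move/negP: nfree; apply; apply/freeP.
move=> H0; have [c Hc] := not_all_ex_not _ _ H0.
have [Hs Hc'] := imply_to_and _ _ Hc.
have [i Hi] := not_all_ex_not _ _ Hc'.
exists c; split; first by exists i; apply/eqP.
apply: (window_zero hs (a := a) (n := n)).
  by move=> x /HM; rewrite /a /n; lia.
move=> k Hk; rewrite sval_sum.
have Hs' : \sum_j c j *: emb (fun p => sval (w j) p) a n = 0.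
  by apply: etrans Hs; apply: eq_bigr => j _; rewrite (nth_mktuple _ 0).
rewrite -emb_lin in Hs'.
by rewrite -[RHS](emb_zero Hs' Hk).
Qed.

Lemma ccanc (A B W : cob X) (f : chom A B) (g : chom B A) (x : chom A W) :
  ccomp g f = cid A -> ccomp (ccomp x g) f = x.
Proof. by move=> H; rewrite -ccompA H ccompm1. Qed.

Lemma split_idem_gen (Y : tob) (e : endT Y) (He : e * e = e)
  (K : int -> cob X) (k : forall q, chom (K q) (px (sval Y) q))
  (r : forall q, chom (px (sval Y) q) (K q))
  (Hrk : forall q, ccomp (r q) (k q) = cid _) (Hkr : forall q, ccomp (k q) (r q) = sval e q) :
  exists (A : tob) (i : hm A Y) (p : hm Y A), tcomp p i = tid A /\ tcomp i p = e.
Proof.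
pose sa := fun q => (match L q as b return arrT (px (sval Y)) q b -> arrT K q b with
   | true => fun a => ccomp (r (q-1)) (ccomp a (k q))
   | false => fun a => ccomp (r q) (ccomp a (k (q-1))) end) (parr (sval Y) q).
pose A0 : pers_obj X L := PersObj sa.
have ee : forall q, ccomp (sval e q) (sval e q) = sval e q.
  by move=> q; rewrite -[RHS](f_equal (fun f : endT Y => sval f q) He).
have ek : forall q W (x : chom (px (sval Y) q) W), ccomp (ccomp x (sval e q)) (k q) = ccomp x (k q).
  by move=> q W x; rewrite -Hkr -!ccompA Hrk ccompm1.
have re0 : forall q, ccomp (r q) (sval e q) = r q.
  by move=> q; rewrite -Hkr ccompA Hrk ccomp1m.
have re : forall q W (x : chom (K q) W), ccomp (ccomp x (r q)) (sval e q) = ccomp x (r q).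
  by move=> q W x; rewrite -ccompA re0.
have kr : forall q W (x : chom (px (sval Y) q) W), ccomp (ccomp x (k q)) (r q) = ccomp x (sval e q).
  by move=> q W x; rewrite -ccompA Hkr.
have rk : forall q W (x : chom (K q) W), ccomp (ccomp x (r q)) (k q) = x.
  by move=> q W x; rewrite -ccompA Hrk ccompm1.
have tA : tempered A0.
  case: (proj2_sig Y) => s hs; exists s => q Hq.
  have Hi := hs q Hq; have Hsq := proj2_sig e q; move: Hi Hsq.
  rewrite /arr_is_iso /square /A0 /sa /=.
  move: (parr (sval Y) q); case: (L q) => a /= [b [h1 h2]] Hsq.
  - have Hs' : forall W (x : chom (px (sval Y) (q-1)) W),
       ccomp (ccomp x (sval e (q-1))) a = ccomp (ccomp x a) (sval e q).
      by move=> W x; rewrite -!ccompA Hsq.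
    exists (ccomp (r q) (ccomp b (k (q-1)))); split; rewrite !ccompA.
    + by rewrite kr Hs' ek ccanc // Hrk.
    + by rewrite kr -Hs' ccanc // ek Hrk.
  - have Hs' : forall W (x : chom (px (sval Y) q) W),
       ccomp (ccomp x (sval e q)) a = ccomp (ccomp x a) (sval e (q-1)).
      by move=> W x; rewrite -!ccompA Hsq.
    exists (ccomp (r (q-1)) (ccomp b (k q))); split; rewrite !ccompA.
    + by rewrite kr Hs' ek ccanc // Hrk.
    + by rewrite kr -Hs' ccanc // ek Hrk.
pose A : tob := exist _ A0 tA.
have ci : commutes (Y := A0) (Z := sval Y) k.
  move=> q; have Hsq := proj2_sig e q; move: Hsq.
  rewrite /square /A0 /sa /=.
  move: (parr (sval Y) q); case: (L q) => a /= Hsq.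
  - by rewrite !ccompA Hkr -Hsq ek.
  - by rewrite !ccompA Hkr -Hsq ek.
have cp : commutes (Y := sval Y) (Z := A0) r.
  move=> q; have Hsq := proj2_sig e q; move: Hsq.
  rewrite /square /A0 /sa /=.
  move: (parr (sval Y) q); case: (L q) => a /= Hsq.
  - by rewrite -!ccompA Hkr Hsq ccompA re0.
  - by rewrite -!ccompA Hkr Hsq ccompA re0.
exists A, (exist _ k ci : hm A Y), (exist _ r cp : hm Y A); split.
  by apply: thom_eq => q /=; rewrite Hrk.
by apply: thom_eq => q /=; rewrite Hkr.
Qed.

Lemma split_pt (kerX : forall (A B : cob X) (f : chom A B), exists (K : cob X) (k : chom K A), is_kernel f k)
  (A : cob X) (e : chom A A) : ccomp e e = e ->
  exists K (k : chom K A) (r : chom A K), ccomp r k = cid K /\ ccomp k r = e.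
Proof.
move=> ee; have [K [k [Hk Hu]]] := kerX _ _ (cid A - e).
have ek : ccomp e k = k.
  by apply/eqP; rewrite eq_sym -subr_eq0 -[k in k - _]ccomp1m -ccompNl -ccompDl1 Hk.
have : ccomp (cid A - e) e = 0 by rewrite ccompDl1 ccompNl ccomp1m ee subrr.
case/Hu => r [Hr _]; exists K, k, r; split => //.
have : ccomp (cid A - e) k = 0 by [].
case/Hu => u [_ Uu].
by rewrite -(Uu (ccomp r k)) ?(Uu (cid K)) // ?ccompm1 // ccompA Hr.
Qed.

Lemma split_idem (kerX : forall (A B : cob X) (f : chom A B), exists (K : cob X) (k : chom K A), is_kernel f k)
  (Y : tob) (e : endT Y) : e * e = e ->
  exists (A : tob) (i : hm A Y) (p : hm Y A), tcomp p i = tid A /\ tcomp i p = e.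
Proof.
move=> He.
have ee : forall q, ccomp (sval e q) (sval e q) = sval e q.
  by move=> q; rewrite -[RHS](f_equal (fun f : endT Y => sval f q) He).
have H : forall q, exists t : {K : cob X & (chom K (px (sval Y) q) * chom (px (sval Y) q) K)%type},
    ccomp (projT2 t).2 (projT2 t).1 = cid _ /\ ccomp (projT2 t).1 (projT2 t).2 = sval e q.
  by move=> q; have [K [k [r [h1 h2]]]] := split_pt kerX (ee q); exists (existT _ K (k, r)).
pose t q := proj1_sig (constructive_indefinite_description _ (H q)).
apply: (split_idem_gen He (K := fun q => projT1 (t q)) (k := fun q => (projT2 (t q)).1)
   (r := fun q => (projT2 (t q)).2)) => q.
- exact: (proj2_sig (constructive_indefinite_description _ (H q))).1.
- exact: (proj2_sig (constructive_indefinite_description _ (H q))).2.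
Qed.

Lemma fit (Y : tob) (f : endT Y) n : forall (h : endT Y) (c : 'I_n -> F),
  \sum_(i < n) c i *: (h * f ^+ i) = 0 -> (exists i, c i != 0) ->
  exists k (g : endT Y), GRing.comm g f /\ h * f ^+ k = h * f ^+ k.+1 * g.
Proof.
elim: n => [|n IH] h c; first by move=> _ [[]].
rewrite big_ord_recl /= expr0 mulr1 => E [i Hi].
have E2 : \sum_(i < n) c (lift ord0 i) *: (h * f ^+ (bump 0 i)) =
          (h * f) * \sum_(i < n) c (lift ord0 i) *: f ^+ i.
  rewrite mulr_sumr; apply: eq_bigr => j _.
  by rewrite endZr /bump /= add1n exprS mulrA.
have [c0|c0] := eqVneq (c ord0) 0.
  rewrite c0 scale0r add0r in E.
  have E' : \sum_(i < n) c (lift ord0 i) *: ((h * f) * f ^+ i) = 0.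
    by apply: etrans E; apply: eq_bigr => j _; rewrite /bump /= add1n exprS mulrA.
  have [j Hj] : exists j, c (lift ord0 j) != 0.
    move: Hi; case: (unliftP ord0 i) => [j ->|->]; first by exists j.
    by rewrite c0 eqxx.
  have [k [g [Hg Hk]]] := IH _ _ E' (ex_intro _ j Hj).
  by exists k.+1, g; split => //; move: Hk; rewrite !exprS !mulrA.
pose S := \sum_(i < n) c (lift ord0 i) *: f ^+ i.
exists 0%N, (- (c ord0)^-1 *: S); split.
  rewrite /GRing.comm endZl endZr; congr (_ *: _).
  rewrite /S mulr_suml mulr_sumr; apply: eq_bigr => j _.
  by rewrite endZl endZr -exprSr exprS.
rewrite expr0 expr1 mulr1 endZr -E2.
have -> : \sum_(i < n) c (lift ord0 i) *: (h * f ^+ bump 0 i) = - (c ord0 *: h).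
  by apply/eqP; rewrite -subr_eq0 opprK addrC E.
by rewrite scalerN scaleNr opprK scalerA mulVf // scale1r.
Qed.

Lemma local_of_idem (Y : tob) (Hid : forall e : endT Y, e * e = e -> e = 0 \/ e = 1)
  (f : endT Y) : ~ (exists g : endT Y, f * g = 1 /\ g * f = 1) ->
  exists g : endT Y, (1 - f) * g = 1 /\ g * (1 - f) = 1.
Proof.
move=> Hnu; have [D HD] := key Y.
have [c [Hc E]] := HD D.+1 (fun i => f ^+ i) (ltnSn D).
have E' : \sum_i c i *: (1 * f ^+ i) = 0.
  by apply: etrans E; apply: eq_bigr => i _; rewrite mul1r.
have [k [g [Hg Hk]]] := fit E' Hc; rewrite !mul1r in Hk.
have Hj : forall j, f ^+ k = f ^+ (k + j) * g ^+ j.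
  elim=> [|j IH]; first by rewrite addn0 expr0 mulr1.
  rewrite IH addnC exprD Hk mulrA -exprD -mulrA -exprS.
  by have -> : (j + k.+1 = k + j.+1)%N by lia.
have cfg : GRing.comm f g := commr_sym Hg.
have cfgk : forall j, GRing.comm (f ^+ k) (g ^+ j).
  by move=> j; apply/commrX/commr_sym/commrX.
have he : f ^+ k = f ^+ k * f ^+ k * g ^+ k by rewrite -exprD -Hj.
pose e := f ^+ k * g ^+ k.
have ee : e * e = e.
  by rewrite /e mulrA -[f ^+ k * g ^+ k * f ^+ k]mulrA -cfgk mulrA -he.
case: (Hid e ee) => He.
  have fk0 : f ^+ k = 0 by rewrite he -mulrA -/e He mulr0.
  pose S := \sum_(i < k) f ^+ i.
  have cS : GRing.comm f S by apply: commr_sum => i _; apply/commrX.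
  have E1 : (1 - f) * S = 1.
    by rewrite -opprB mulNr -subrX1 fk0 sub0r opprK.
  exists S; split => //.
  by rewrite mulrBr mulrBl mulr1 mul1r cS in E1 *.
have u1 : f * (f ^+ k * g ^+ k.+1) = 1.
  by rewrite mulrA -exprS [g ^+ k.+1]exprS mulrA -Hk -/e He.
have u2 : (f ^+ k * g ^+ k.+1) * f = 1.
  by rewrite -(commrM (commrX k (commr_refl f)) (commrX k.+1 cfg)).
by exfalso; apply: Hnu; exists (f ^+ k * g ^+ k.+1).
Qed.

Definition famP (Y : tob) m (e : 'I_m -> endT Y) : Prop :=
  [/\ forall i, e i * e i = e i, forall i, e i <> 0,
      forall i j, i != j -> e i * e j = 0 & \sum_i e i = 1].

Definition primitive (Y : tob) (e : endT Y) : Prop :=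
  forall a b : endT Y, a * a = a -> b * b = b -> a * b = 0 -> b * a = 0 -> a + b = e ->
    a = 0 \/ b = 0.

Lemma fam_bound (Y : tob) : exists D, forall m (e : 'I_m -> endT Y), famP e -> (m <= D)%N.
Proof.
have [D HD] := key Y; exists D => m e [h1 h2 h3 h4].
rewrite leqNgt; apply/negP => /(HD m e) [c [[j Hj] E]].
have : e j * \sum_i c i *: e i = c j *: e j.
  rewrite mulr_sumr (bigD1 j) //= endZr h1 big1 ?addr0 // => i Hi.
  by rewrite endZr h3 ?scaler0 // eq_sym.
rewrite E mulr0 => /esym /eqP; rewrite scaler_eq0 (negbTE Hj) /= => /eqP.
exact: h2.
Qed.

Lemma widen_lift m (j : 'I_m) : widen_ord (leqnSn m) j = lift ord_max j.
Proof. apply: val_inj; exact: (esym (lift_max j)). Qed.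

Lemma refine_fam (Y : tob) m (e : 'I_m -> endT Y) (i : 'I_m) (a b : endT Y) :
  famP e -> a * a = a -> b * b = b -> a * b = 0 -> b * a = 0 -> a + b = e i ->
  a <> 0 -> b <> 0 -> exists e' : 'I_m.+1 -> endT Y, famP e'.
Proof.
move=> [h1 h2 h3 h4] aa bb ab ba abe a0 b0.
have ae : a * e i = a by rewrite -abe mulrDr aa ab addr0.
have ea : e i * a = a by rewrite -abe mulrDl aa ba addr0.
have be : b * e i = b by rewrite -abe mulrDr bb ba add0r.
have eb : e i * b = b by rewrite -abe mulrDl bb ab add0r.
pose e' := fun j : 'I_m.+1 => if unlift ord_max j is Some j' then
   (if j' == i then a else e j') else b.
have eL : forall j, e' (lift ord_max j) = if j == i then a else e j.
  by move=> j; rewrite /e' liftK.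
have eM : e' ord_max = b by rewrite /e' unlift_none.
exists e'; split.
- move=> j; case: (unliftP ord_max j) => [j' ->|->]; rewrite ?eL ?eM //.
  by case: eqP.
- move=> j; case: (unliftP ord_max j) => [j' ->|->]; rewrite ?eL ?eM //.
  by case: eqP.
- move=> j k; case: (unliftP ord_max j) => [j' ->|->];
  case: (unliftP ord_max k) => [k' ->|->]; rewrite ?eL ?eM ?eqxx //.
  + rewrite (inj_eq (@lift_inj _ ord_max)) => jk.
    case: (eqVneq j' i) => [ji|ji]; case: (eqVneq k' i) => [ki|ki].
    * by rewrite ji ki eqxx in jk.
    * by rewrite -ae -mulrA h3 ?mulr0 // eq_sym.
    * by rewrite -ea mulrA h3 ?mul0r.
    * exact: h3.
  + move=> _; case: (eqVneq j' i) => [ji|ji] //.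
    by rewrite -eb mulrA h3 ?mul0r.
  + move=> _; case: (eqVneq k' i) => [ki|ki] //.
    by rewrite -be -mulrA h3 ?mulr0 // eq_sym.
- rewrite big_ord_recr /= eM.
  under eq_bigr => j _ do rewrite widen_lift eL.
  rewrite (bigD1 i) //= eqxx.
  have -> : \sum_(j < m | j != i) (if j == i then a else e j) = \sum_(j < m | j != i) e j.
    by apply: eq_bigr => j /negbTE ->.
  by rewrite -h4 [RHS](bigD1 i) //= -abe addrAC.
Qed.

Lemma zero_iff (Z : tob) : @is_zero_ob (tempered_pers_cat X L) Z <-> tid Z = 0.
Proof.
split; first by move/(_ Z) => [H _]; exact: H.
move=> H B; split => f g.
- have E : forall h : hm Z B, h = 0 by move=> h; rewrite -[h]tcomp1r H tcomp0r.
  by rewrite (E f) (E g).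
- have E : forall h : hm B Z, h = 0 by move=> h; rewrite -[h]tcomp1l H tcomp0l.
  by rewrite (E f) (E g).
Qed.

Lemma tcanc (A B C : tob) (f : hm A B) (g : hm B A) (x : hm C A) :
  tcomp g f = tid A -> tcomp g (tcomp f x) = x.
Proof. by move=> H; rewrite tcompA H tcomp1l. Qed.

Lemma tzr (A B C D : tob) (f : hm B C) (g : hm C D) (x : hm A B) :
  tcomp g f = 0 -> tcomp g (tcomp f x) = 0.
Proof. by move=> H; rewrite tcompA H tcomp0l. Qed.

Lemma prim_indec (Y A : tob) (e : endT Y) (i : hm A Y) (p : hm Y A) :
  tcomp p i = tid A -> tcomp i p = e -> e <> 0 -> primitive e ->
  @indecomposable (tempered_pers_cat X L) A.
Proof.
move=> pi ip e0 pe; split.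
  move/zero_iff => H; apply: e0; rewrite -ip -[p]tcomp1l H tcomp0l tcomp0r //.
move=> [B [C [Y' [nB nC [j1 [j2 [q1 [q2 [h1 h2 h3 h4 h5]]]]] [h [h' [hh1 hh2]]]]]]].
rewrite /= in h1 h2 h3 h4 h5 hh1 hh2.
pose f : endT Y := tcomp i (tcomp h' (tcomp j1 (tcomp q1 (tcomp h p)))).
pose g : endT Y := tcomp i (tcomp h' (tcomp j2 (tcomp q2 (tcomp h p)))).
have ff : f * f = f.
  by rewrite endM /f -!tcompA (tcanc _ pi) (tcanc _ hh2) (tcanc _ h1).
have gg : g * g = g.
  by rewrite endM /g -!tcompA (tcanc _ pi) (tcanc _ hh2) (tcanc _ h2).
have fg : f * g = 0.
  by rewrite endM /f -!tcompA (tcanc _ pi) (tcanc _ hh2) (tzr _ h3) !tcomp0r.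
have gf : g * f = 0.
  by rewrite endM /g -!tcompA (tcanc _ pi) (tcanc _ hh2) (tzr _ h4) !tcomp0r.
have fge : f + g = e.
  rewrite -ip -[p]tcomp1l -hh1 -tcompA -[tcomp h p]tcomp1l -h5.
  by rewrite /f /g !tcompDl !tcompDr -!tcompA.
case: (pe f g ff gg fg gf fge) => H0.
- apply: nB; apply/zero_iff.
  have Hb : tcomp q1 (tcomp h (tcomp p (tcomp f (tcomp i (tcomp h' j1))))) = tid B.
    by rewrite /f -!tcompA (tcanc _ pi) (tcanc _ hh2) (tcanc _ h1) (tcanc _ pi) (tcanc _ hh2) h1.
  by rewrite -Hb H0 tcomp0l !tcomp0r.
- apply: nC; apply/zero_iff.
  have Hb : tcomp q2 (tcomp h (tcomp p (tcomp g (tcomp i (tcomp h' j2))))) = tid C.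
    by rewrite /g -!tcompA (tcanc _ pi) (tcanc _ hh2) (tcanc _ h2) (tcanc _ pi) (tcanc _ hh2) h2.
  by rewrite -Hb H0 tcomp0l !tcomp0r.
Qed.

Lemma iso_refl (Y : tob) : @isomorphic (tempered_pers_cat X L) Y Y.
Proof. by exists (tid Y), (tid Y); split; apply: tcomp1l. Qed.

Lemma indec_idem (kerX : forall (A B : cob X) (f : chom A B), exists (K : cob X) (k : chom K A), is_kernel f k)
  (Y : tob) : @indecomposable (tempered_pers_cat X L) Y ->
  forall e : endT Y, e * e = e -> e = 0 \/ e = 1.
Proof.
move=> [nz nd] e ee.
case: (classic (e = 0)) => e0; first by left.
case: (classic (e = 1)) => e1; first by right.
have [A [i1 [p1 [pi1 ip1]]]] := split_idem kerX ee.
have ee' : (1 - e) * (1 - e) = 1 - e by rewrite mulrBl mul1r mulrBr mulr1 ee subrr subr0.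
have [B [i2 [p2 [pi2 ip2]]]] := split_idem kerX ee'.
exfalso; apply: nd; exists A, B, Y; split.
- move/zero_iff => H; apply: e0; rewrite -ip1 -[p1]tcomp1l H tcomp0l tcomp0r //.
- move/zero_iff => H; apply: e1; apply/eqP; rewrite -subr_eq0 -oppr_eq0 opprB.
  by rewrite -ip2 -[p2]tcomp1l H tcomp0l tcomp0r.
- exists i1, i2, p1, p2; split => //=.
  + have -> : tcomp p1 i2 = tcomp p1 (tcomp (tcomp i1 p1) (tcomp (tcomp i2 p2) i2)).
      by rewrite -!tcompA (tcanc _ pi1) pi2 tcomp1r.
    rewrite ip1 ip2 [tcomp e _]tcompA -endM mulrBr mulr1 ee subrr tcomp0l tcomp0r //.
  + have -> : tcomp p2 i1 = tcomp p2 (tcomp (tcomp i2 p2) (tcomp (tcomp i1 p1) i1)).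
      by rewrite -!tcompA (tcanc _ pi2) pi1 tcomp1r.
    rewrite ip1 ip2 [tcomp (1 - e) _]tcompA -endM mulrBl mul1r ee subrr tcomp0l tcomp0r //.
  + change (tcomp i1 p1 + tcomp i2 p2 = (1 : endT Y)).
    by rewrite ip1 ip2 addrC subrK.
- exact: iso_refl.
Qed.

Lemma nonprim (Y : tob) (e : endT Y) : ~ primitive e ->
  exists a b : endT Y, [/\ a * a = a, b * b = b, a * b = 0, b * a = 0 &
     [/\ a + b = e, a <> 0 & b <> 0]].
Proof.
move=> H; apply: NNPP => H2; apply: H => a b h1 h2 h3 h4 h5.
apply: NNPP => H3; apply: H2; exists a, b.
by have [? ?] := not_or_and _ _ H3; split.
Qed.

Lemma exist_decomp
  (kerX : forall (A B : cob X) (f : chom A B), exists (K : cob X) (k : chom K A), is_kernel f k)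
  (Y : tob) : exists n (A : 'I_n -> tob),
   (forall k, @indecomposable (tempered_pers_cat X L) (A k)) /\
   exists Y', @is_direct_sum (tempered_pers_cat X L) n A Y' /\
              @isomorphic (tempered_pers_cat X L) Y Y'.
Proof.
case: (classic (tid Y = 0)) => Hz.
  exists 0%N, (fun _ => Y); split; first by case.
  exists Y; split; last exact: iso_refl.
  exists (fun _ => tid Y), (fun _ => tid Y); split; [by case|by case|].
  by rewrite big_ord0 /= Hz.
have [D HD] := fam_bound Y.
have F1 : famP (fun _ : 'I_1 => (1 : endT Y)).
  split => //; first by move=> i; rewrite mul1r.
  - by move=> i j; rewrite !ord1 eqxx.
  - by rewrite big_ord1.
have main : forall t m (e : 'I_m -> endT Y), (D - m <= t)%N -> famP e ->
    exists m (e : 'I_m -> endT Y), famP e /\ forall i, primitive (e i).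
  elim=> [|t IH] m e Ht Fe;
    (case: (classic (forall i, primitive (e i))) => Hp; first by exists m, e);
    have [i /nonprim [a [b [aa bb ab ba [abe a0 b0]]]]] := not_all_ex_not _ _ Hp;
    have [e' Fe'] := refine_fam Fe aa bb ab ba abe a0 b0;
    have Hm := HD _ _ Fe'.
  - by exfalso; lia.
  - by apply: (IH m.+1 e') => //; lia.
have [m [e [[h1 h2 h3 h4] hp]]] := main D 1%N _ (leq_subr 1 D) F1.
have Hs : forall i, exists t : {A : tob & (hm A Y * hm Y A)%type},
    tcomp (projT2 t).2 (projT2 t).1 = tid _ /\ tcomp (projT2 t).1 (projT2 t).2 = e i.
  by move=> i; have [A [j [p [? ?]]]] := split_idem kerX (h1 i); exists (existT _ A (j, p)).
pose t i := proj1_sig (constructive_indefinite_description _ (Hs i)).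
have Ht : forall i, tcomp (projT2 (t i)).2 (projT2 (t i)).1 = tid _ /\
     tcomp (projT2 (t i)).1 (projT2 (t i)).2 = e i.
  by move=> i; exact: (proj2_sig (constructive_indefinite_description _ (Hs i))).
exists m, (fun i => projT1 (t i)); split.
  by move=> i; apply: (prim_indec (Ht i).1 (Ht i).2 (h2 i) (hp i)).
exists Y; split; last exact: iso_refl.
exists (fun i => (projT2 (t i)).1), (fun i => (projT2 (t i)).2); split.
- by move=> k; exact: (Ht k).1.
- move=> j k jk /=.
  have -> : tcomp (projT2 (t j)).2 (projT2 (t k)).1 = tcomp (projT2 (t j)).2
      (tcomp (tcomp (projT2 (t j)).1 (projT2 (t j)).2)
        (tcomp (tcomp (projT2 (t k)).1 (projT2 (t k)).2) (projT2 (t k)).1)).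
    by rewrite -!tcompA (tcanc _ (Ht j).1) (Ht k).1 tcomp1r.
  rewrite (Ht j).2 (Ht k).2 [tcomp (e j) _]tcompA -endM h3 // tcomp0l tcomp0r //.
- change (\sum_(k < m) tcomp (projT2 (t k)).1 (projT2 (t k)).2 = (1 : endT Y)).
  by rewrite -h4; apply: eq_bigr => k _; exact: (Ht k).2.
Qed.
End Tcat.

Theorem proposition5p2 (F : fieldType) (X : LinCat F) (L : int -> bool) :
  abelian X -> KrullSchmidt (tempered_pers_cat X L).
Proof.
move=> [_ [_ kerX _ _ _]]; split.
  by move=> Y; exact: exist_decomp kerX Y.
move=> Y HY; split.
  by move=> H; apply: HY.1; apply/zero_iff; exact: H.
move=> f Hf.
exact: (local_of_idem (indec_idem kerX HY) Hf).
Qed.
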